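(* Let $m\ge 0$ and let $n,k$ be integers with $0\le n,k<4\cdot 3^m$. Then $$\binom{n+4\cdot 3^m}{k}_F\equiv \begin{cases}\ \ \binom{n}{k}_F & \text{if } k \text{ is even},\\ -\binom{n}{k}_F & \text{if } k \text{ is odd},\end{cases}\pmod 3,$$ $$\binom{n+8\cdot 3^m}{k}_F\equiv \binom{n}{k}_F \pmod 3,$$ and $$\binom{n+8\cdot 3^m}{k+4\cdot 3^m}_F\equiv \begin{cases}-\binom{n}{k}_F & \text{if } n \text{ is even},\\ \ \ \binom{n}{k}_F & \text{if } n \text{ is odd},\end{cases}\pmod 3.$$
   Context: The Fibonacci numbers are defined by $F_0=0$, $F_1=1$, $F_n=F_{n-1}+F_{n-2}$ for $n\ge 2$. For $n\ge 0$ let $n!_F=F_1F_2\cdots F_n$ (with $0!_F=1$), and for $0\le k\le n$ define the Fibonomial coefficient $\binom{n}{k}_F=\dfrac{n!_F}{k!_F\,(n-k)!_F}$; by convention $\binom{n}{k}_F=0$ if $k<0$ or $k>n$. Note $\binom{n}{k}_F=\binom{n}{n-k}_F$. *)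

(* Defs.v *)
From mathcomp Require Import all_boot all_order all_algebra.
Set Implicit Arguments. Unset Strict Implicit. Unset Printing Implicit Defensive.

Fixpoint fib (n : nat) : nat :=
  match n with
  | 0 => 0
  | 1 => 1
  | (m.+1 as p).+1 => fib p + fib m
  end.

Definition fibfact (n : nat) : nat := \prod_(1 <= i < n.+1) fib i.

(* Fibonomial coefficient: n!_F / (k!_F (n-k)!_F) for k <= n, 0 for k > n.
   (The quotient is exact, as Fibonomials are integers.) *)
Definition fibonomial (n k : nat) : nat :=
  if k <= n then fibfact n %/ (fibfact k * fibfact (n - k)) else 0.

(* Main.v *)
Require Import Defs.
From mathcomp Require Import all_boot all_order all_algebra.
From mathcomp Require Import ring zify.
Import GRing.Theory.

Lemma fib_add a b : fib (a + b).+1 = fib a.+1 * fib b.+1 + fib a * fib b.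
Proof.
elim: a b => [|a IH] b; first by rewrite add0n mul1n mul0n addn0.
rewrite addSn -addnS IH.
have -> : fib b.+2 = fib b.+1 + fib b by [].
have -> : fib a.+2 = fib a.+1 + fib a by [].
ring.
Qed.

Lemma fib_gt0 n : 0 < fib n.+1.
Proof.
elim: n => [|n IH] //=. case: n IH => [|n] IH //=. by rewrite addn_gt0 IH.
Qed.

Lemma fibfactS n : fibfact n.+1 = fibfact n * fib n.+1.
Proof. by rewrite /fibfact big_nat_recr. Qed.

Lemma fibfact_gt0 n : 0 < fibfact n.
Proof. elim: n => [|n IH]; first by rewrite /fibfact big_nil.
by rewrite fibfactS muln_gt0 IH fib_gt0. Qed.

Fixpoint fb n k := match n, k with
  | _, 0 => 1 | 0, _.+1 => 0
  | n'.+1, k'.+1 => fib (n' - k').+1 * fb n' k' + fib k' * fb n' k'.+1 end.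

Lemma fb_gt n k : n < k -> fb n k = 0.
Proof.
elim: n k => [|n IH] [|k] //= H.
by rewrite !IH ?muln0 // ltnW.
Qed.

Lemma fbSS n k : fb n.+1 k.+1 = fib (n - k).+1 * fb n k + fib k * fb n k.+1.
Proof. by []. Qed.

Lemma fb_spec n k : k <= n -> fb n k * (fibfact k * fibfact (n - k)) = fibfact n.
Proof.
elim: n k => [|n IH] [|k] // H.
- by rewrite /fibfact big_nil !mul1n.
- by rewrite [fb _ 0]/= {1}/fibfact big_nil !mul1n subn0.
rewrite fbSS subSS fibfactS [fibfact n.+1]fibfactS.
have Hk := IH k H.
have Hf := fib_add (n - k) k. rewrite subnK // in Hf.
case: (ltnP k n) => Hkn.
- have Hk1 := IH k.+1 Hkn.
  have E : n - k = (n - k.+1).+1 by rewrite subnS prednK // subn_gt0.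
  have E2 : fibfact (n - k) = fibfact (n - k.+1) * fib (n - k) by rewrite E fibfactS.
  rewrite fibfactS in Hk1.
  rewrite Hf mulnDr -{1}Hk -Hk1 E2. ring.
- have E : k = n by apply/eqP; rewrite eqn_leq -ltnS H Hkn.
  subst k. rewrite (@fb_gt n n.+1) // subnn. rewrite subnn in Hk.
  have F0 : fibfact 0 = 1 by rewrite /fibfact big_nil.
  have F1 : fib 1 = 1 by [].
  rewrite F0 muln1 in Hk. rewrite F0 F1 -[in RHS]Hk. ring.
Qed.

Lemma fibonomial_fb n k : fibonomial n k = fb n k.
Proof.
rewrite /fibonomial; case: leqP => H.
- by rewrite -(@fb_spec n k H) mulnK // muln_gt0 !fibfact_gt0.
- by rewrite fb_gt.
Qed.
Local Open Scope ring_scope.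
Notation F3 := 'F_3.

Lemma three0 : (3%:R : F3) = 0.
Proof. by rewrite -(Fp_nat_mod (isT : prime 3)). Qed.
Lemma two_m1 : (2%:R : F3) = -1.
Proof. by apply/eqP; rewrite -addr_eq0 natr1 three0. Qed.

Definition f j : F3 := (fib j)%:R.
Definition g n k : F3 := (fb n k)%:R.

Lemma f4 j : f (j + 4) = - f j.
Proof.
rewrite /f addnC.
have -> : (fib (4 + j) = 3 * fib j.+1 + 2 * fib j)%N by rewrite (fib_add 3 j).
by rewrite natrD !natrM three0 two_m1 mul0r add0r mulN1r.
Qed.

Lemma gSS n k : g n.+1 k.+1 = f (n - k).+1 * g n k + f k * g n k.+1.
Proof. by rewrite /g fbSS natrD !natrM. Qed.

Lemma g_gt n k : (n < k)%N -> g n k = 0.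
Proof. by move=> H; rewrite /g fb_gt. Qed.

Lemma fshift n k : f (n + 4 - k).+1 * g n k = - f (n - k).+1 * g n k.
Proof.
case: (leqP k n) => H; last by rewrite g_gt // !mulr0.
by rewrite addnC -addnBA // addnC -addSn f4.
Qed.

Definition z n k : F3 := if (4 <= k)%N then g n (k - 4) else 0.

Lemma P4 n k : g (n + 4) k = (-1) ^+ k * g n k + (-1) ^+ (n + k) * z n k.
Proof.
elim: n k => [|n IH] k.
  have Fm : forall a, (a %% 3 = 0)%N -> (a%:R : F3) = 0.
    by move=> a Ha; rewrite -(Fp_nat_mod (isT : prime 3)) Ha.
  case: k => [|[|[|[|[|k]]]]].
  - by rewrite /z /g /= expr0 mul1r mulr0 addr0.
  - by rewrite /z /g /= Fm // !mulr0 addr0.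
  - by rewrite /z /g /= Fm // !mulr0 addr0.
  - by rewrite /z /g /= Fm // !mulr0 addr0.
  - by rewrite /z /= /g /= mulr0 add0r -signr_odd mul1r.
  - rewrite /z /= !g_gt //; ring.
case: k => [|k].
  by rewrite /z /g /= mulr1 mulr0 addr0.
rewrite addSn gSS !IH gSS.
rewrite mulrDr mulrCA fshift.
have Z0 : forall m j, (j < 4)%N -> z m j = 0 by move=> m j Hj; rewrite /z leqNgt Hj.
rewrite !addnS !addSn !exprS.
case: (ltnP k 3) => Hk.
  rewrite (Z0 n k) ?(Z0 n k.+1) ?(Z0 n.+1 k.+1) //; last by apply: ltnW.
  ring.
case: (ltnP k 4) => Hk4.
  have -> : k = 3%N by apply/eqP; rewrite eqn_leq Hk andbT -ltnS.
  rewrite (Z0 n 3) // /z /= subnn /g /= -/(g n 0).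
  have -> : f 3 = -1 by rewrite /f /= two_m1.
  have -> : g n 0 = 1 by rewrite /g; case: n {IH}.
  ring.
have [j ->] : exists j, k = (j + 4)%N by exists (k - 4)%N; rewrite subnK.
rewrite /z !leq_addl addnK.
have -> : ((n + 0).+4 - (j + 4) = n - j)%N by lia.
have -> : ((j + 4).+1 - 4 = j.+1)%N by lia.
have -> : (3 < (j + 4).+1)%N by lia.
rewrite gSS f4. ring.
Qed.

Lemma sgn4 e : (-1) ^+ (e + 4) = (-1) ^+ e :> F3.
Proof. by rewrite -signr_odd oddD addbF signr_odd. Qed.

Lemma PA m s : (s < 4)%N -> g (m + 4) s = (-1) ^+ s * g m s.
Proof. by move=> Hs; rewrite P4 /z leqNgt Hs mulr0 addr0. Qed.

Lemma PB m k : g (m + 4) (k + 4) = (-1) ^+ k * g m (k + 4) + (-1) ^+ (m + k) * g m k.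
Proof. by rewrite P4 addnA !sgn4 /z leq_addl addnK. Qed.

Lemma sgn_eq e1 e2 c : e1 = (e2 + 2 * c)%N -> (-1) ^+ e1 = (-1) ^+ e2 :> F3.
Proof. by move=> ->; rewrite -signr_odd oddD oddM andFb addbF signr_odd. Qed.

Lemma lucas a b r s : (r < 4)%N -> (s < 4)%N ->
  g (4 * a + r) (4 * b + s) = (-1) ^+ (b * r + s * a) * g r s * ('C(a, b))%:R.
Proof.
move=> Hr Hs.
elim: a b => [|a IH] [|b].
- by rewrite !muln0 !add0n bin0 expr0 mul1r mulr1.
- have -> : 'C(0, b.+1) = 0%N by [].
  rewrite mulr0n mulr0 g_gt //; lia.
- have -> : (4 * a.+1 + r = (4 * a + r) + 4)%N by lia.
  have IH0 := IH 0%N; rewrite muln0 add0n in IH0.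
  rewrite muln0 add0n PA // IH0.
  rewrite !bin0 !mul0n !add0n.
  rewrite mulnS exprD; ring.
- have -> : (4 * a.+1 + r = (4 * a + r) + 4)%N by lia.
  have -> : (4 * b.+1 + s = (4 * b + s) + 4)%N by lia.
  rewrite PB.
  have -> : (4 * b + s + 4 = 4 * b.+1 + s)%N by lia.
  rewrite (IH b) (IH b.+1) binS natrD.
  have S1 : (-1) ^+ (4 * b + s) * (-1) ^+ (b.+1 * r + s * a) = (-1) ^+ (b.+1 * r + s * a.+1) :> F3.
    by rewrite -exprD (@sgn_eq _ (b.+1 * r + s * a.+1) (2 * b)) //; ring.
  have S2 : (-1) ^+ (4 * a + r + (4 * b + s)) * (-1) ^+ (b * r + s * a) = (-1) ^+ (b.+1 * r + s * a.+1) :> F3.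
    by rewrite -exprD (@sgn_eq _ (b.+1 * r + s * a.+1) (2 * a + 2 * b)) //; ring.
  rewrite !mulrA S1 S2. ring.
Qed.

Lemma dvd_bin_pow m j : (0 < j)%N -> (j < (3 ^ m)%N)%N -> (3 %| 'C((3 ^ m)%N, j))%N.
Proof.
move=> Hj0 Hj; case: j Hj0 Hj => [|i] // _ Hj.
have E := mul_bin_diag ((3 ^ m)%N) i.
apply/negPn/negP => Hn.
have Hc : coprime ((3 ^ m)%N) 'C((3 ^ m)%N, i.+1) by apply: coprimeXl; rewrite prime_coprime.
have : ((3 ^ m)%N %| i.+1)%N.
  by rewrite -(Gauss_dvdl _ Hc) -E dvdn_mulr.
move/dvdn_leq => /(_ isT); rewrite leqNgt Hj //.
Qed.

Lemma Fdvd n : (3 %| n)%N -> (n%:R : F3) = 0.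
Proof. by move=> H; apply/eqP; rewrite -(dvdn_pcharf (pchar_Fp (isT : prime 3))). Qed.

Lemma binN0 m y : ('C((3 ^ m)%N, y)%:R : F3) = (y == 0%N)%:R + (y == (3 ^ m)%N)%:R.
Proof.
have HN : (0 < (3 ^ m)%N)%N by rewrite expn_gt0.
case: (posnP y) => [->|Hy].
  by rewrite bin0 eq_sym (negbTE (lt0n_neq0 HN)) addr0 mulr1n.
rewrite mulr0n add0r.
case: (ltngtP y ((3 ^ m)%N)) => H.
- by rewrite Fdvd ?dvd_bin_pow // mulr0n.
- by rewrite bin_small // mulr0n.
- by rewrite H binn.
Qed.

Lemma binshift m x y : ('C(x + (3 ^ m)%N, y)%:R : F3) =
  'C(x, y)%:R + (if ((3 ^ m)%N <= y)%N then 'C(x, y - (3 ^ m)%N)%:R else 0).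
Proof.
have HN : (0 < (3 ^ m)%N)%N by rewrite expn_gt0.
elim: x y => [|x IH] y.
  rewrite add0n binN0 !bin0n; case: leqP => H.
    by rewrite subn_eq0 (@eqn_leq y (3 ^ m)%N) H andbT.
  by rewrite (ltn_eqF H) addr0.
case: y => [|y].
  by rewrite !bin0 leqNgt HN addr0.
rewrite addSn !binS !natrD !IH.
case: (ltngtP ((3 ^ m)%N) y.+1) => H.
- have H' : ((3 ^ m)%N <= y)%N by rewrite -ltnS.
  rewrite H' (subSn H') binS natrD; ring.
- have H' : ((3 ^ m)%N <= y)%N = false by apply/negbTE; rewrite -ltnNge; apply: ltnW.
  rewrite H'; ring.
- have H' : ((3 ^ m)%N <= y)%N = false by rewrite H ltnn.
  rewrite H' -H subnn !bin0; ring.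
Qed.

Lemma B1 m a b : (b < 3 ^ m)%N -> ('C(a + 3 ^ m, b)%:R : F3) = 'C(a, b)%:R.
Proof. by move=> Hb; rewrite binshift leqNgt Hb addr0. Qed.

Lemma B2 m a b : (b < 3 ^ m)%N -> ('C(a + 2 * 3 ^ m, b)%:R : F3) = 'C(a, b)%:R.
Proof. by move=> Hb; rewrite mul2n -addnn addnA !B1. Qed.

Lemma B3 m a b : (a < 3 ^ m)%N -> (b < 3 ^ m)%N ->
  ('C(a + 2 * 3 ^ m, b + 3 ^ m)%:R : F3) = - 'C(a, b)%:R.
Proof.
move=> Ha Hb; rewrite mul2n -addnn addnA binshift (leq_addl b (3 ^ m)%N) addnK (@B1 m a b Hb).
rewrite binshift (leq_addl b (3 ^ m)%N) addnK (@bin_small a); last by apply: leq_trans Ha (leq_addl _ _).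
rewrite add0r; transitivity ('C(a, b)%:R * (2%:R : F3)); first ring.
by rewrite two_m1 mulrN1.
Qed.

Lemma sgnN m s : (-1) ^+ (s * 3 ^ m) = (-1) ^+ s :> F3.
Proof. by rewrite -signr_odd oddM oddX orbT andbT signr_odd. Qed.

Lemma core m a b r s : (a < 3 ^ m)%N -> (b < 3 ^ m)%N -> (r < 4)%N -> (s < 4)%N ->
  [/\ g (4 * a + r + 4 * 3 ^ m) (4 * b + s) = (-1) ^+ s * g (4 * a + r) (4 * b + s),
      g (4 * a + r + 8 * 3 ^ m) (4 * b + s) = g (4 * a + r) (4 * b + s) &
      g (4 * a + r + 8 * 3 ^ m) (4 * b + s + 4 * 3 ^ m) = - (-1) ^+ r * g (4 * a + r) (4 * b + s)].
Proof.
move=> Ha Hb Hr Hs.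
have E1 : (4 * a + r + 4 * 3 ^ m = 4 * (a + 3 ^ m) + r)%N by ring.
have E2 : (4 * a + r + 8 * 3 ^ m = 4 * (a + 2 * 3 ^ m) + r)%N by ring.
have E3 : (4 * b + s + 4 * 3 ^ m = 4 * (b + 3 ^ m) + s)%N by ring.
rewrite E1 E2 E3 !lucas // B1 // B2 // B3 //.
have SO : forall e1 e2, odd e1 = odd e2 -> (-1) ^+ e1 = (-1) ^+ e2 :> F3.
  by move=> e1 e2 H; rewrite -signr_odd H signr_odd.
have O3 : odd (3 ^ m)%N by rewrite oddX orbT.
split.
- have -> : (-1) ^+ (b * r + s * (a + 3 ^ m)) = (-1) ^+ s * (-1) ^+ (b * r + s * a) :> F3.
    rewrite -exprD; apply: SO; rewrite !(oddD, oddM) O3 /=.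
    by case: (odd b); case: (odd r); case: (odd s); case: (odd a).
  ring.
- have -> : (-1) ^+ (b * r + s * (a + 2 * 3 ^ m)) = (-1) ^+ (b * r + s * a) :> F3.
    apply: SO; rewrite !(oddD, oddM) O3 /=.
    by case: (odd b); case: (odd r); case: (odd s); case: (odd a).
  ring.
- have -> : (-1) ^+ ((b + 3 ^ m) * r + s * (a + 2 * 3 ^ m)) = (-1) ^+ r * (-1) ^+ (b * r + s * a) :> F3.
    rewrite -exprD; apply: SO; rewrite !(oddD, oddM) O3 /=.
    by case: (odd b); case: (odd r); case: (odd s); case: (odd a).
  ring.
Qed.

Lemma Fdvd' n : (n%:R : F3) = 0 -> (3 %| n)%N.
Proof. by move=> H; rewrite (dvdn_pcharf (pchar_Fp (isT : prime 3))) H. Qed.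

Lemma convP x y : (x%:R : F3) = y%:R -> (x%:Z = y%:Z %[mod 3])%Z.
Proof.
move=> H.
have : ((x + 2 * y)%:R : F3) = 0 by rewrite natrD natrM two_m1 H; ring.
move/Fdvd'/dvdnP => [c Hc].
apply/eqP; rewrite eqz_mod_dvd; apply/dvdzP; exists (c%:Z - y%:Z)%R.
lia.
Qed.

Lemma convN x y : (x%:R : F3) = - y%:R -> (x%:Z = - y%:Z %[mod 3])%Z.
Proof.
move=> H.
have : ((x + y)%:R : F3) = 0 by rewrite natrD H; ring.
move/Fdvd'/dvdnP => [c Hc].
apply/eqP; rewrite eqz_mod_dvd; apply/dvdzP; exists (c%:Z)%R.
lia.
Qed.

Theorem mainTheorem5 (m n k : nat) (hn : (n < 4 * 3 ^ m)%N) (hk : (k < 4 * 3 ^ m)%N) :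
  ((fibonomial (n + 4 * 3 ^ m) k)%:Z
     = (if odd k then - (fibonomial n k)%:Z else (fibonomial n k)%:Z) %[mod 3])%Z
  /\ ((fibonomial (n + 8 * 3 ^ m) k)%:Z = (fibonomial n k)%:Z %[mod 3])%Z
  /\ ((fibonomial (n + 8 * 3 ^ m) (k + 4 * 3 ^ m))%:Z
     = (if odd n then (fibonomial n k)%:Z else - (fibonomial n k)%:Z) %[mod 3])%Z.
Proof.
rewrite !fibonomial_fb.
have En : n = (4 * (n %/ 4) + n %% 4)%N by rewrite mulnC -divn_eq.
have Ek : k = (4 * (k %/ 4) + k %% 4)%N by rewrite mulnC -divn_eq.
have Ha : (n %/ 4 < 3 ^ m)%N by rewrite ltn_divLR // mulnC.
have Hb : (k %/ 4 < 3 ^ m)%N by rewrite ltn_divLR // mulnC.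
have Hr : (n %% 4 < 4)%N by rewrite ltn_mod.
have Hs : (k %% 4 < 4)%N by rewrite ltn_mod.
have [C1 C2 C3] := @core m _ _ _ _ Ha Hb Hr Hs.
rewrite -En -Ek in C1 C2 C3.
have Ok : odd k = odd (k %% 4) by rewrite {1}Ek oddD oddM /=.
have On : odd n = odd (n %% 4) by rewrite {1}En oddD oddM /=.
split; [|split].
- move: C1; rewrite /g Ok -signr_odd; case: (odd (k %% 4)) => /= C1.
  + by apply: convN; rewrite C1 expr1 mulN1r.
  + by apply: convP; rewrite C1 expr0 mul1r.
- by apply: convP; exact: C2.
- move: C3; rewrite /g On -signr_odd; case: (odd (n %% 4)) => /= C3.
  + by apply: convP; rewrite C3 expr1 opprK mul1r.
  + by apply: convN; rewrite C3 expr0 mulN1r.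
Qed.
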